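(* Let $\mathcal{T}$ be a triangulated category with a weak semi-orthogonal decomposition $\mathcal{T}=\langle\mathcal{A},\mathcal{B}\rangle$. Then there is a weak semi-orthogonal decomposition $\widetilde{\mathcal{T}}=\langle\widetilde{\mathcal{A}},\widetilde{\mathcal{B}}\rangle$ of the idempotent completion. Moreover, $\mathcal{T}$ is idempotent complete if and only if $\mathcal{A}$ and $\mathcal{B}$ are idempotent complete.
   Context: A weak semi-orthogonal decomposition $\mathcal{T}=\langle\mathcal{A},\mathcal{B}\rangle$ means $\mathcal{A},\mathcal{B}$ are full triangulated subcategories with $\mathrm{Hom}(B,A)=0$ for all $B\in\mathcal{B}$, $A\in\mathcal{A}$, and every object $T$ fits into an exact triangle $B\to T\to A\to B[1]$ with $B\in\mathcal{B}$, $A\in\mathcal{A}$. An additive category is idempotent complete if every idempotent $e:A\to A$ splits, $A\cong\ker e\oplus\operatorname{im}e$. The idempotent completion $\widetilde{\mathcal{A}}$ has objects pairs $(A,e)$ with $e$ an idempotent endomorphism of $A$, and morphisms $(A,e)\to(A',e')$ the morphisms $f:A\to A'$ with $fe=e'f=f$. For a triangulated $\mathcal{T}$, $\widetilde{\mathcal{T}}$ carries a unique triangulated structure making $\mathcal{T}\to\widetilde{\mathcal{T}}$ exact, whose exact triangles are the retracts of exact triangles of $\mathcal{T}$ (Balmer–Schlichting). *)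

(* Defs.v *)
From Corelib Require Import ssreflect.
Set Implicit Arguments.
Unset Strict Implicit.

Record TriRaw := {
  Obj : Type;
  Hom : Obj -> Obj -> Type;
  idm : forall X, Hom X X;
  comp : forall X Y Z, Hom Y Z -> Hom X Y -> Hom X Z;
  zerom : forall X Y, Hom X Y;
  shO : Obj -> Obj;
  shH : forall X Y, Hom X Y -> Hom (shO X) (shO Y);
  dist : forall X Y Z, Hom X Y -> Hom Y Z -> Hom Z (shO X) -> Prop
}.
Arguments Obj t : clear implicits.
Arguments Hom t _ _ : clear implicits.
Arguments idm {t} X.
Arguments comp {t X Y Z} _ _.
Arguments zerom {t} X Y.
Arguments shO {t} _.
Arguments shH {t X Y} _.
Arguments dist {t X Y Z} _ _ _.

Section RawNotions.
Context {T : TriRaw}.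

Definition is_iso (X Y : Obj T) (f : Hom T X Y) : Prop :=
  exists g : Hom T Y X, comp g f = idm X /\ comp f g = idm Y.

Definition isomorphic (X Y : Obj T) : Prop := exists f : Hom T X Y, is_iso f.

Definition is_zero_obj (Z : Obj T) : Prop :=
  (forall X (f g : Hom T Z X), f = g) /\ (forall X (f g : Hom T X Z), f = g).

(* A full triangulated subcategory, given by its class of objects P
   (not assumed closed under isomorphism). *)
Definition triang_subcat (P : Obj T -> Prop) : Prop :=
  (exists X, P X) /\
  (forall X, P X -> P (shO X)) /\
  (forall X, P X -> exists Y, P Y /\ isomorphic (shO Y) X) /\
  (forall X Y Z (f : Hom T X Y) (g : Hom T Y Z) (h : Hom T Z (shO X)),
      dist f g h -> P X -> P Y -> exists Z', P Z' /\ isomorphic Z Z').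

Definition weakSOD (A B : Obj T -> Prop) : Prop :=
  triang_subcat A /\ triang_subcat B /\
  (forall Bo Ao, B Bo -> A Ao -> forall f : Hom T Bo Ao, f = zerom Bo Ao) /\
  (forall X, exists Bo Ao (b : Hom T Bo X) (a : Hom T X Ao) (c : Hom T Ao (shO Bo)),
      B Bo /\ A Ao /\ dist b a c).
End RawNotions.

Section TriAxioms.
Variable T : TriRaw.
Variable addm : forall X Y, Hom T X Y -> Hom T X Y -> Hom T X Y.
Variable oppm : forall X Y, Hom T X Y -> Hom T X Y.
Arguments addm {X Y}.
Arguments oppm {X Y}.
Implicit Types X Y Z W S Q : Obj T.

Record TriLaws : Prop := {
  comp_assoc : forall X Y Z W (f : Hom T X Y) (g : Hom T Y Z) (h : Hom T Z W),
      comp h (comp g f) = comp (comp h g) f;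
  comp_idl : forall X Y (f : Hom T X Y), comp (idm Y) f = f;
  comp_idr : forall X Y (f : Hom T X Y), comp f (idm X) = f;
  add_assoc : forall X Y (f g h : Hom T X Y), addm f (addm g h) = addm (addm f g) h;
  add_comm : forall X Y (f g : Hom T X Y), addm f g = addm g f;
  add_0 : forall X Y (f : Hom T X Y), addm f (zerom X Y) = f;
  add_opp : forall X Y (f : Hom T X Y), addm f (oppm f) = zerom X Y;
  comp_addl : forall X Y Z (f g : Hom T Y Z) (h : Hom T X Y),
      comp (addm f g) h = addm (comp f h) (comp g h);
  comp_addr : forall X Y Z (f : Hom T Y Z) (g h : Hom T X Y),
      comp f (addm g h) = addm (comp f g) (comp f h);
  comp_0l : forall X Y Z (h : Hom T X Y), comp (zerom Y Z) h = zerom X Z;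
  comp_0r : forall X Y Z (f : Hom T Y Z), comp f (zerom X Y) = zerom X Z;
  has_zero : exists Z : Obj T, is_zero_obj Z;
  has_biprod : forall X Y, exists S (iX : Hom T X S) (iY : Hom T Y S)
      (pX : Hom T S X) (pY : Hom T S Y),
      comp pX iX = idm X /\ comp pY iY = idm Y /\
      comp pX iY = zerom Y X /\ comp pY iX = zerom X Y /\
      addm (comp iX pX) (comp iY pY) = idm S;
  sh_id : forall X, shH (idm X) = idm (shO X);
  sh_comp : forall X Y Z (f : Hom T X Y) (g : Hom T Y Z),
      shH (comp g f) = comp (shH g) (shH f);
  sh_add : forall X Y (f g : Hom T X Y), shH (addm f g) = addm (shH f) (shH g);
  sh_faithful : forall X Y (f g : Hom T X Y), shH f = shH g -> f = g;
  sh_full : forall X Y (f : Hom T (shO X) (shO Y)), exists g, shH g = f;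
  sh_esurj : forall Y, exists X, isomorphic (shO X) Y;
  tr1_iso : forall X Y Z X' Y' Z' (f : Hom T X Y) (g : Hom T Y Z) (h : Hom T Z (shO X))
      (f' : Hom T X' Y') (g' : Hom T Y' Z') (h' : Hom T Z' (shO X'))
      (a : Hom T X X') (b : Hom T Y Y') (c : Hom T Z Z'),
      dist f g h -> is_iso a -> is_iso b -> is_iso c ->
      comp b f = comp f' a -> comp c g = comp g' b -> comp (shH a) h = comp h' c ->
      dist f' g' h';
  tr1_id : forall X Z, is_zero_obj Z -> dist (idm X) (zerom X Z) (zerom Z (shO X));
  tr1_ext : forall X Y (f : Hom T X Y), exists Z (g : Hom T Y Z) (h : Hom T Z (shO X)),
      dist f g h;
  tr2 : forall X Y Z (f : Hom T X Y) (g : Hom T Y Z) (h : Hom T Z (shO X)),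
      dist f g h <-> dist g h (oppm (shH f));
  tr3 : forall X Y Z X' Y' Z' (f : Hom T X Y) (g : Hom T Y Z) (h : Hom T Z (shO X))
      (f' : Hom T X' Y') (g' : Hom T Y' Z') (h' : Hom T Z' (shO X'))
      (a : Hom T X X') (b : Hom T Y Y'),
      dist f g h -> dist f' g' h' -> comp b f = comp f' a ->
      exists c : Hom T Z Z', comp c g = comp g' b /\ comp (shH a) h = comp h' c;
  tr4 : forall X Y Z Q1 Q2 Q3 (f : Hom T X Y) (g : Hom T Y Z)
      (p1 : Hom T Y Q1) (d1 : Hom T Q1 (shO X))
      (p2 : Hom T Z Q2) (d2 : Hom T Q2 (shO X))
      (p3 : Hom T Z Q3) (d3 : Hom T Q3 (shO Y)),
      dist f p1 d1 -> dist (comp g f) p2 d2 -> dist g p3 d3 ->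
      exists (a : Hom T Q1 Q2) (b : Hom T Q2 Q3),
        dist a b (comp (shH p1) d3) /\
        comp a p1 = comp p2 g /\ comp d2 a = d1 /\
        comp b p2 = p3 /\ comp d3 b = comp (shH f) d2
}.
End TriAxioms.

Record TriCat := {
  traw :> TriRaw;
  addm : forall X Y, Hom traw X Y -> Hom traw X Y -> Hom traw X Y;
  oppm : forall X Y, Hom traw X Y -> Hom traw X Y;
  tri_laws : TriLaws addm oppm
}.
Arguments addm {t X Y} _ _.
Arguments oppm {t X Y} _.

Section IdemComplete.
Context {T : TriCat}.

Definition idem_splits (P : Obj T -> Prop) (A : Obj T) (e : Hom T A A) : Prop :=
  exists K I (iK : Hom T K A) (pK : Hom T A K) (iI : Hom T I A) (pI : Hom T A I),
    P K /\ P I /\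
    comp pK iK = idm K /\ comp pI iI = idm I /\
    comp pK iI = zerom I K /\ comp pI iK = zerom K I /\
    addm (comp iK pK) (comp iI pI) = idm A /\
    comp iI pI = e.

Definition idem_complete (P : Obj T -> Prop) : Prop :=
  forall A (e : Hom T A A), P A -> comp e e = e -> idem_splits P e.
End IdemComplete.

Section IdemCompletion.
Variable T : TriCat.
Let L := tri_laws T.

Record IObj := { iob : Obj T; iid : Hom T iob iob; iid_idem : comp iid iid = iid }.

Record IHom (X Y : IObj) := {
  ihom : Hom T (iob X) (iob Y);
  ihom_r : comp ihom (iid X) = ihom;
  ihom_l : comp (iid Y) ihom = ihom }.
Arguments ihom {X Y} _.

Definition Iid (X : IObj) : IHom X X :=
  @Build_IHom X X (iid X) (iid_idem X) (iid_idem X).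

Lemma Icomp_r (X Y Z : IObj) (g : IHom Y Z) (f : IHom X Y) :
  comp (comp (ihom g) (ihom f)) (iid X) = comp (ihom g) (ihom f).
Proof. by rewrite -(comp_assoc L) (ihom_r f). Qed.

Lemma Icomp_l (X Y Z : IObj) (g : IHom Y Z) (f : IHom X Y) :
  comp (iid Z) (comp (ihom g) (ihom f)) = comp (ihom g) (ihom f).
Proof. by rewrite (comp_assoc L) (ihom_l g). Qed.

Definition Icomp (X Y Z : IObj) (g : IHom Y Z) (f : IHom X Y) : IHom X Z :=
  Build_IHom (Icomp_r g f) (Icomp_l g f).

Definition Izero (X Y : IObj) : IHom X Y :=
  @Build_IHom X Y (zerom _ _) (comp_0l L _ _) (comp_0r L _ _).

Lemma ish_idem (X : IObj) : comp (shH (iid X)) (shH (iid X)) = shH (iid X).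
Proof. by rewrite -(sh_comp L) (iid_idem X). Qed.

Definition IshO (X : IObj) : IObj := Build_IObj (ish_idem X).

Lemma Ish_r (X Y : IObj) (f : IHom X Y) :
  comp (shH (ihom f)) (iid (IshO X)) = shH (ihom f).
Proof. by rewrite /= -(sh_comp L) (ihom_r f). Qed.

Lemma Ish_l (X Y : IObj) (f : IHom X Y) :
  comp (iid (IshO Y)) (shH (ihom f)) = shH (ihom f).
Proof. by rewrite /= -(sh_comp L) (ihom_l f). Qed.

Definition IshH (X Y : IObj) (f : IHom X Y) : IHom (IshO X) (IshO Y) :=
  @Build_IHom (IshO X) (IshO Y) (shH (ihom f)) (Ish_r f) (Ish_l f).

(* (X,eX) -f-> (Y,eY) -g-> (Z,eZ) -h-> (X[1],eX[1]) is exact iff it is a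
   retract (in the idempotent completion) of the image of an exact triangle
   X' -f'-> Y' -g'-> Z' -h'-> X'[1] of T (objects (X',1), ...). *)
Definition Idist (X Y Z : IObj) (f : IHom X Y) (g : IHom Y Z) (h : IHom Z (IshO X))
  : Prop :=
  exists X' Y' Z' (f' : Hom T X' Y') (g' : Hom T Y' Z') (h' : Hom T Z' (shO X'))
    (iX : Hom T (iob X) X') (pX : Hom T X' (iob X))
    (iY : Hom T (iob Y) Y') (pY : Hom T Y' (iob Y))
    (iZ : Hom T (iob Z) Z') (pZ : Hom T Z' (iob Z)),
    dist f' g' h' /\
    comp iX (iid X) = iX /\ comp iY (iid Y) = iY /\ comp iZ (iid Z) = iZ /\
    comp iY (ihom f) = comp f' iX /\ comp iZ (ihom g) = comp g' iY /\
    comp (shH iX) (ihom h) = comp h' iZ /\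
    comp (iid X) pX = pX /\ comp (iid Y) pY = pY /\ comp (iid Z) pZ = pZ /\
    comp pY f' = comp (ihom f) pX /\ comp pZ g' = comp (ihom g) pY /\
    comp (shH pX) h' = comp (ihom h) pZ /\
    comp pX iX = iid X /\ comp pY iY = iid Y /\ comp pZ iZ = iid Z.

Definition IdemComp : TriRaw :=
  {| Obj := IObj; Hom := IHom; idm := Iid; comp := Icomp; zerom := Izero;
     shO := IshO; shH := IshH; dist := Idist |}.

Definition Itilde (P : Obj T -> Prop) : Obj IdemComp -> Prop :=
  fun X => P (iob X).
End IdemCompletion.

(* Main.v *)
Require Import Defs.
From Corelib Require Import ssreflect.
From Stdlib Require Import ProofIrrelevance.
Set Implicit Arguments.
Unset Strict Implicit.

Declare Scope tc_scope.
Local Notation "g \o f" := (comp g f) (at level 40, left associativity) : tc_scope.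
Local Notation "f + g" := (addm f g) : tc_scope.
Local Notation "- f" := (oppm f) : tc_scope.
Local Notation "0" := (zerom _ _) : tc_scope.
Local Open Scope tc_scope.

Section Base.
Variable T : TriCat.
Let L := tri_laws T.


Implicit Types X Y Z W : Obj T.

Lemma cA X Y Z W (f : Hom T X Y) (g : Hom T Y Z) (h : Hom T Z W) :
  h \o (g \o f) = h \o g \o f.
Proof. exact: (comp_assoc L). Qed.
Lemma c1l X Y (f : Hom T X Y) : idm Y \o f = f. Proof. exact: (comp_idl L). Qed.
Lemma c1r X Y (f : Hom T X Y) : f \o idm X = f. Proof. exact: (comp_idr L). Qed.
Lemma c0l X Y Z (f : Hom T X Y) : zerom Y Z \o f = 0. Proof. exact: (comp_0l L). Qed.
Lemma c0r X Y Z (f : Hom T Y Z) : f \o zerom X Y = 0. Proof. exact: (comp_0r L). Qed.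
Lemma cDl X Y Z (f g : Hom T Y Z) (h : Hom T X Y) : (f + g) \o h = f \o h + g \o h.
Proof. exact: (comp_addl L). Qed.
Lemma cDr X Y Z (f : Hom T Y Z) (g h : Hom T X Y) : f \o (g + h) = f \o g + f \o h.
Proof. exact: (comp_addr L). Qed.
Lemma aA X Y (f g h : Hom T X Y) : f + (g + h) = f + g + h. Proof. exact: (add_assoc L). Qed.
Lemma aC X Y (f g : Hom T X Y) : f + g = g + f. Proof. exact: (add_comm L). Qed.
Lemma a0 X Y (f : Hom T X Y) : f + zerom X Y = f. Proof. exact: (add_0 L). Qed.
Lemma a0l X Y (f : Hom T X Y) : zerom X Y + f = f. Proof. by rewrite aC a0. Qed.
Lemma aN X Y (f : Hom T X Y) : f + - f = 0. Proof. exact: (add_opp L). Qed.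
Lemma aNl X Y (f : Hom T X Y) : - f + f = 0. Proof. by rewrite aC aN. Qed.
Lemma a_eq0 X Y (f g : Hom T X Y) : f + g = 0 -> g = - f.
Proof. by move=> H; rewrite -(a0l g) -(aNl f) -aA H a0. Qed.
Lemma aK X Y (f g h : Hom T X Y) : f + g = f + h -> g = h.
Proof. by move=> H; rewrite -(a0l g) -(a0l h) -(aNl f) -!aA H. Qed.
Lemma NN X Y (f : Hom T X Y) : - - f = f.
Proof. by symmetry; apply: a_eq0; rewrite aNl. Qed.
Lemma N_inj X Y (f g : Hom T X Y) : - f = - g -> f = g.
Proof. by move=> H; rewrite -(NN f) H NN. Qed.
Lemma sub_eq0 X Y (f g : Hom T X Y) : f + - g = 0 -> f = g.
Proof. by move=> /a_eq0 H; rewrite -(NN g) H NN. Qed.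
Lemma N0 X Y : - zerom X Y = 0.
Proof. by symmetry; apply: a_eq0; rewrite a0. Qed.
Lemma cNl X Y Z (f : Hom T Y Z) (h : Hom T X Y) : (- f) \o h = - (f \o h).
Proof. by apply: a_eq0; rewrite -cDl aN c0l. Qed.
Lemma cNr X Y Z (f : Hom T Y Z) (h : Hom T X Y) : f \o (- h) = - (f \o h).
Proof. by apply: a_eq0; rewrite -cDr aN c0r. Qed.
Lemma ND X Y (f g : Hom T X Y) : - (f + g) = - f + - g.
Proof. symmetry; apply: a_eq0. by rewrite (aC (-f)) aA -(aA f) aN a0 aN. Qed.

Lemma sh1 X : shH (idm X) = idm (shO X). Proof. exact: (sh_id L). Qed.
Lemma shc X Y Z (f : Hom T X Y) (g : Hom T Y Z) : shH (g \o f) = shH g \o shH f.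
Proof. exact: (sh_comp L). Qed.
Lemma shD X Y (f g : Hom T X Y) : shH (f + g) = shH f + shH g.
Proof. exact: (sh_add L). Qed.
Lemma sh0 X Y : shH (zerom X Y) = 0.
Proof.
have H : shH (zerom X Y) + shH (zerom X Y) = shH (zerom X Y) + 0.
  by rewrite -shD a0 a0.
exact: (aK H).
Qed.
Lemma shN X Y (f : Hom T X Y) : shH (- f) = - shH f.
Proof. by apply: a_eq0; rewrite -shD aN sh0. Qed.
Lemma sh_inj X Y (f g : Hom T X Y) : shH f = shH g -> f = g.
Proof. exact: (sh_faithful L). Qed.

Lemma zero_sh Z : is_zero_obj Z -> is_zero_obj (shO Z).
Proof.
move=> [H1 H2].
have E : idm (shO Z) = 0 by rewrite -sh1 (H1 _ (idm Z) 0) sh0.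
split=> X' f g.
- by rewrite -(c1r f) -(c1r g) E !c0r.
- by rewrite -(c1l f) -(c1l g) E !c0l.
Qed.

Lemma dist_gf X Y Z (f : Hom T X Y) (g : Hom T Y Z) (h : Hom T Z (shO X)) :
  dist f g h -> g \o f = 0.
Proof.
move=> D. have [Zo Zz] := has_zero L.
have [c [Hc _]] := tr3 L (tr1_id L X Zz) D (a := idm X) (b := f) (eq_refl _).
by rewrite -Hc c0r.
Qed.

Lemma contra X Y Z W (f : Hom T X Y) (g : Hom T Y Z) (h : Hom T Z (shO X))
  (v : Hom T Y W) : dist f g h -> v \o f = 0 -> exists s : Hom T Z W, s \o g = v.
Proof.
move=> D Hv. have [Zo Zz] := has_zero L.
have D2 : dist (zerom Zo W) (idm W) (zerom W (shO Zo)).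
  apply/(tr2 L).
  have -> : oppm (shH (zerom Zo W)) = zerom (shO Zo) (shO W) by apply: (proj1 (zero_sh Zz)).
  exact: (tr1_id L W (zero_sh Zz)).
have E : v \o f = zerom Zo W \o zerom X Zo by rewrite c0l.
have [c [Hc _]] := tr3 L D D2 E.
by exists c; rewrite Hc c1l.
Qed.

Lemma cova X Y Z W (f : Hom T X Y) (g : Hom T Y Z) (h : Hom T Z (shO X))
  (u : Hom T W Y) : dist f g h -> g \o u = 0 -> exists t : Hom T W X, f \o t = u.
Proof.
move=> D Hu. have [Zo Zz] := has_zero L.
have D1 := (proj1 (tr2 L _ _ _) (tr1_id L W Zz)).
have D2 := (proj1 (tr2 L _ _ _) D).
have E : zerom Zo Z \o zerom W Zo = g \o u by rewrite c0l Hu.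
have [c [_ Hc]] := tr3 L D1 D2 E.
have [t Ht] := sh_full L c.
exists t; apply: sh_inj; apply: N_inj.
by rewrite shc Ht -cNl -Hc sh1 cNr c1r.
Qed.

Lemma rot X Y Z (f : Hom T X Y) (g : Hom T Y Z) (h : Hom T Z (shO X)) :
  dist f g h -> dist g h (- shH f).
Proof. by move/(tr2 L). Qed.

Lemma IHom_eq (X Y : IObj T) (f g : IHom X Y) : ihom f = ihom g -> f = g.
Proof.
case: f g => f1 f2 f3 [g1 g2 g3] /= E; subst.
by rewrite (proof_irrelevance _ f2 g2) (proof_irrelevance _ f3 g3).
Qed.

End Base.


Section SOD.
Variable T : TriCat.
Let L := tri_laws T.

Variables A B : Obj T -> Prop.
Hypothesis H : weakSOD A B.

Lemma orth Bo Ao (f : Hom T Bo Ao) : B Bo -> A Ao -> f = 0.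
Proof. move=> hb ha; case: H => _ [_ [O _]]; exact: O. Qed.
Lemma Ash X : A X -> A (shO X).
Proof. case: H => [[_ [S _]] _]; exact: S. Qed.
Lemma Bsh X : B X -> B (shO X).
Proof. case: H => [_ [[_ [S _]] _]]; exact: S. Qed.

Section Tri.
Variables (B0 X0 A0 : Obj T) (b : Hom T B0 X0) (a : Hom T X0 A0) (c : Hom T A0 (shO B0)).
Hypotheses (D : dist b a c) (hB : B B0) (hA : A A0).

Lemma mono_b W (u : Hom T W B0) : B W -> b \o u = 0 -> u = 0.
Proof.
move=> hW Hu.
have D2 := rot (rot D).
have E : (- shH b) \o shH u = 0 by rewrite cNl -shc Hu sh0 N0.
have [t Ht] := cova D2 E.
rewrite (orth t (Bsh hW) hA) c0r -(sh0 W B0) in Ht.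
symmetry; exact: sh_inj Ht.
Qed.

Lemma epi_a W (v : Hom T A0 W) : A W -> v \o a = 0 -> v = 0.
Proof.
move=> hW Hv.
have [s Hs] := contra (rot D) Hv.
by rewrite -Hs (orth s (Bsh hB) hW) c0l.
Qed.

Lemma factor (d : Hom T X0 X0) : d \o b = 0 -> a \o d = 0 ->
  exists t : Hom T A0 B0, d = b \o t \o a.
Proof.
move=> H1 H2.
have [s Hs] := contra D H1.
have E : (a \o s) \o a = 0 by rewrite -cA Hs H2.
have E2 := epi_a hA E.
have [t Ht] := cova D E2.
by exists t; rewrite -Hs -Ht.
Qed.

Lemma lift (e : Hom T X0 X0) : e \o e = e ->
  exists (eB : Hom T B0 B0) (eA : Hom T A0 A0),
    e \o b = b \o eB /\ a \o e = eA \o a /\ eB \o eB = eB /\ eA \o eA = eA /\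
    c \o eA = shH eB \o c.
Proof.
move=> He.
have E1 : (a \o e) \o b = 0 by rewrite -cA; apply: orth.
have [eA HA] := contra D E1.
have E2 : a \o (e \o b) = 0 by rewrite cA; apply: orth.
have [eB HB] := cova D E2.
exists eB, eA.
have IB : eB \o eB = eB.
  apply: sub_eq0; apply: (mono_b hB).
  by rewrite cDr cNr cA HB -cA HB cA He aN.
have IA : eA \o eA = eA.
  apply: sub_eq0; apply: (epi_a hA).
  by rewrite cDl cNl -cA HA cA HA -cA He aN.
have E3 : e \o b = b \o eB by rewrite HB.
have [g [Hg1 Hg2]] := tr3 L D D E3.
have Eg : g = eA.
  apply: sub_eq0; apply: (epi_a hA).
  by rewrite cDl cNl Hg1 HA aN.
subst g.
by rewrite HB HA; do !split.
Qed.
End Tri.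

End SOD.


Section IC.
Variable T : TriCat.
Let L := tri_laws T.

Lemma cx (X Y Z W : Obj T) (g : Hom T Y Z) (f : Hom T X Y) (h : Hom T X Z) :
  g \o f = h -> forall (x : Hom T Z W), x \o g \o f = x \o h.
Proof. by move=> E x; rewrite -cA E. Qed.

Lemma mk_iso (X Y : IObj T) (f : Hom T (iob X) (iob Y)) (g : Hom T (iob Y) (iob X)) :
  f \o iid X = f -> iid Y \o f = f -> g \o iid Y = g -> iid X \o g = g ->
  g \o f = iid X -> f \o g = iid Y -> isomorphic (T := IdemComp T) X Y.
Proof.
move=> h1 h2 h3 h4 h5 h6.
exists (Build_IHom h1 h2); exists (Build_IHom h3 h4); split; apply: IHom_eq => //=.
Qed.

Lemma tilde_sub (P : Obj T -> Prop) : triang_subcat P ->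
  (forall (X Y Z : IObj T) (f : IHom X Y) (g : IHom Y Z) (h : IHom Z (IshO X)),
     Idist f g h -> P (iob X) -> P (iob Y) ->
     exists Z' : IObj T, P (iob Z') /\ isomorphic (T := IdemComp T) Z Z') ->
  triang_subcat (T := IdemComp T) (Itilde P).
Proof.
move=> [[X0 hX0] [Psh [Pds _]]] Hcone.
split; [|split; [|split]].
- by exists (Build_IObj (c1l (idm X0))).
- by move=> X hX; apply: Psh.
- move=> X hX.
  have [Y0 [hY [u [u' [Hu1 Hu2]]]]] := Pds _ hX.
  set e := iid X.
  have [d Hd] := sh_full L (u' \o e \o u).
  have Id : d \o d = d.
    apply: sh_inj; rewrite shc Hd !cA (cx Hu2) c1r (cx (iid_idem X)) //.
  exists (Build_IObj Id); split => //.
  apply: (@mk_iso (IshO (Build_IObj Id)) X (e \o u) (u' \o e)) => /=; rewrite ?Hd ?cA.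
  + by rewrite (cx Hu2) c1r (iid_idem X).
  + by rewrite (iid_idem X).
  + by rewrite (cx (iid_idem X)).
  + by rewrite (cx Hu2) c1r (cx (iid_idem X)).
  + by rewrite (cx (iid_idem X)).
  + by rewrite (cx Hu2) c1r (iid_idem X).
- move=> X Y Z f g h D hX hY; exact: (Hcone _ _ _ f g h D hX hY).
Qed.

Variables A B : Obj T -> Prop.
Hypothesis H : weakSOD A B.

Lemma decomp X0 : exists Bo Ao (b : Hom T Bo X0) (a : Hom T X0 Ao) (c : Hom T Ao (shO Bo)),
      B Bo /\ A Ao /\ dist b a c.
Proof. case: H => _ [_ [_ Hd]]; exact: Hd. Qed.

Lemma critA (Z : IObj T) :
  (forall B0 (u : Hom T B0 (iob Z)), B B0 -> iid Z \o u = u -> u = 0) ->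
  exists Z' : IObj T, A (iob Z') /\ isomorphic (T := IdemComp T) Z Z'.
Proof.
move=> Hz. set e := iid Z. have He : e \o e = e := iid_idem Z.
have [Bo [Ao [b [a [c [hB [hA D]]]]]]] := decomp (iob Z).
have E0 : e \o b = 0 by apply: Hz => //; rewrite cA He.
have [v Hv] := contra D E0.
have Ie : (a \o e \o v) \o (a \o e \o v) = a \o e \o v.
  by rewrite !cA (cx Hv) !(cx He).
exists (Build_IObj Ie); split => //.
apply: (@mk_iso Z (Build_IObj Ie) (a \o e) (e \o v)) => /=; rewrite ?cA.
- by rewrite ?(cx Hv) ?Hv ?(cx He) ?He ?(cx Hv) ?Hv ?(cx He) ?He.
- by rewrite ?(cx Hv) ?Hv ?(cx He) ?He ?(cx Hv) ?Hv ?(cx He) ?He.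
- by rewrite ?(cx Hv) ?Hv ?(cx He) ?He ?(cx Hv) ?Hv ?(cx He) ?He.
- by rewrite ?(cx Hv) ?Hv ?(cx He) ?He ?(cx Hv) ?Hv ?(cx He) ?He.
- by rewrite ?(cx Hv) ?Hv ?(cx He) ?He ?(cx Hv) ?Hv ?(cx He) ?He.
- by rewrite ?(cx Hv) ?Hv ?(cx He) ?He ?(cx Hv) ?Hv ?(cx He) ?He.
Qed.

Lemma critB (Z : IObj T) :
  (forall A0 (u : Hom T (iob Z) A0), A A0 -> u \o iid Z = u -> u = 0) ->
  exists Z' : IObj T, B (iob Z') /\ isomorphic (T := IdemComp T) Z Z'.
Proof.
move=> Hz. set e := iid Z. have He : e \o e = e := iid_idem Z.
have [Bo [Ao [b [a [c [hB [hA D]]]]]]] := decomp (iob Z).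
have E0 : a \o e = 0 by apply: Hz => //; rewrite -cA He.
have [t Ht] := cova D E0.
have Ie : (t \o e \o b) \o (t \o e \o b) = t \o e \o b.
  by rewrite !cA (cx Ht) !(cx He).
exists (Build_IObj Ie); split => //.
apply: (@mk_iso Z (Build_IObj Ie) (t \o e) (e \o b)) => /=; rewrite ?cA.
- by rewrite ?(cx Ht) ?Ht ?(cx He) ?He ?(cx Ht) ?Ht ?(cx He) ?He.
- by rewrite ?(cx Ht) ?Ht ?(cx He) ?He ?(cx Ht) ?Ht ?(cx He) ?He.
- by rewrite ?(cx Ht) ?Ht ?(cx He) ?He ?(cx Ht) ?Ht ?(cx He) ?He.
- by rewrite ?(cx Ht) ?Ht ?(cx He) ?He ?(cx Ht) ?Ht ?(cx He) ?He.
- by rewrite ?(cx Ht) ?Ht ?(cx He) ?He ?(cx Ht) ?Ht ?(cx He) ?He.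
- by rewrite ?(cx Ht) ?Ht ?(cx He) ?He ?(cx Ht) ?Ht ?(cx He) ?He.
Qed.

Lemma coneA (X Y Z : IObj T) (f : IHom X Y) (g : IHom Y Z) (h : IHom Z (IshO X)) :
  Idist f g h -> A (iob X) -> A (iob Y) ->
  exists Z', A (iob Z') /\ isomorphic (T:=IdemComp T) Z Z'.
Proof.
move=> [X' [Y' [Z' [f' [g' [h' [iX [pX [iY [pY [iZ [pZ [D [_ [_ [_ [_ [_ [Hh [_ [_ [_ [_ [Hg [_ [_ [_ HpZ]]]]]]]]]]]]]]]]]]]]]]]]]]] hX hY.
apply: critA => B0 u hB Hu.
have E1 : ihom h \o u = 0 by apply: (orth H) => //; apply: (Ash H hX).
have E2 : h' \o (iZ \o u) = 0 by rewrite cA -Hh -cA E1 c0r.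
have [t Ht] := cova (rot D) E2.
by rewrite -Hu -HpZ -cA -Ht cA Hg -cA (orth H (pY \o t) hB hY) c0r.
Qed.

Lemma coneB (X Y Z : IObj T) (f : IHom X Y) (g : IHom Y Z) (h : IHom Z (IshO X)) :
  Idist f g h -> B (iob X) -> B (iob Y) ->
  exists Z', B (iob Z') /\ isomorphic (T:=IdemComp T) Z Z'.
Proof.
move=> [X' [Y' [Z' [f' [g' [h' [iX [pX [iY [pY [iZ [pZ [D [_ [_ [_ [_ [_ [Hh [_ [_ [_ [_ [Hg [_ [_ [_ HpZ]]]]]]]]]]]]]]]]]]]]]]]]]]] hX hY.
apply: critB => A0 u hA Hu.
have E1 : (u \o pZ) \o g' = 0 by rewrite -cA Hg cA (orth H (u \o ihom g) hY hA) c0l.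
have [s Hs] := contra (rot D) E1.
by rewrite -Hu -HpZ cA -Hs -cA -Hh cA (orth H (s \o shH iX) (Bsh H hX) hA) c0l.
Qed.

Lemma Idecomp (X : IObj T) :
  exists (Bo Ao : IObj T) (b : IHom Bo X) (a : IHom X Ao) (c : IHom Ao (IshO Bo)),
    B (iob Bo) /\ A (iob Ao) /\ Idist b a c.
Proof.
set e := iid X. have He : e \o e = e := iid_idem X.
have [Bo [Ao [b [a [c [hB [hA D]]]]]]] := decomp (iob X).
have [eB [eA [Hb [Ha [IB [IA Hc]]]]]] := lift H D hB hA He.
set Bo' := Build_IObj IB. set Ao' := Build_IObj IA.
have b1 : (b \o eB) \o eB = b \o eB by rewrite -cA IB.
have b2 : e \o (b \o eB) = b \o eB by rewrite cA Hb -cA IB.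
have a1 : (eA \o a) \o e = eA \o a by rewrite -cA Ha cA IA.
have a2 : eA \o (eA \o a) = eA \o a by rewrite cA IA.
have k1 : (c \o eA) \o eA = c \o eA by rewrite -cA IA.
have k2 : shH eB \o (c \o eA) = c \o eA by rewrite cA -Hc -cA IA.
exists Bo', Ao', (@Build_IHom T Bo' X _ b1 b2), (@Build_IHom T X Ao' _ a1 a2),
  (@Build_IHom T Ao' (IshO Bo') _ k1 k2).
split => //; split => //.
exists Bo, (iob X), Ao, b, a, c, eB, eB, e, e, eA, eA => /=.
split => //; do !split => //.
all: first [by rewrite cA IA Ha | by rewrite Hb -cA IB | by rewrite -cA Ha cA IA
  | by rewrite -Hc -cA IA | by rewrite -cA IA Hc | by rewrite cA Hb -cA IB | by rewrite cA -Hc -cA IA].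
Qed.

Lemma part1 : weakSOD (T := IdemComp T) (Itilde A) (Itilde B).
Proof.
have [SA [SB _]] := H.
split; [|split; [|split]].
- apply: tilde_sub => //; exact: coneA.
- apply: tilde_sub => //; exact: coneB.
- move=> Bo Ao hb ha f; apply: IHom_eq => /=; exact: (orth H).
- exact: Idecomp.
Qed.
End IC.



Section P2.
Variable T : TriCat.
Let L := tri_laws T.

Variables A B : Obj T -> Prop.
Hypothesis H : weakSOD A B.

Lemma retrA (X K : Obj T) (i : Hom T K X) (p : Hom T X K) :
  p \o i = idm K -> A X ->
  exists K' (k : Hom T K K') (k' : Hom T K' K), A K' /\ k' \o k = idm K /\ k \o k' = idm K'.
Proof.
move=> Hpi hX.
have [Bo [Ao [b [a [c [hB [hA D]]]]]]] := decomp H K.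
have Eb : b = 0 by rewrite -(c1l b) -Hpi -cA (orth H (i \o b) hB hX) c0r.
have E0 : idm K \o b = 0 by rewrite Eb c0r.
have [s Hs] := contra D E0.
exists Ao, a, s; split => //; split => //.
apply: sub_eq0; apply: (epi_a H D hB hA).
by rewrite cDl cNl -cA Hs c1r c1l aN.
Qed.

Lemma retrB (X K : Obj T) (i : Hom T K X) (p : Hom T X K) :
  p \o i = idm K -> B X ->
  exists K' (k : Hom T K K') (k' : Hom T K' K), B K' /\ k' \o k = idm K /\ k \o k' = idm K'.
Proof.
move=> Hpi hX.
have [Bo [Ao [b [a [c [hB [hA D]]]]]]] := decomp H K.
have Ea : a = 0 by rewrite -(c1r a) -Hpi cA (orth H (a \o p) hX hA) c0l.
have E0 : a \o idm K = 0 by rewrite Ea c0l.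
have [t Ht] := cova D E0.
exists Bo, t, b; split => //; split => //.
apply: sub_eq0; apply: (mono_b H D hA hB).
by rewrite cDr cNr cA Ht c1l c1r aN.
Qed.

Lemma transport (P : Obj T -> Prop) (X : Obj T) (e : Hom T X X) :
  (forall K (i : Hom T K X) (p : Hom T X K), p \o i = idm K ->
     exists K' (k : Hom T K K') (k' : Hom T K' K), P K' /\ k' \o k = idm K /\ k \o k' = idm K') ->
  idem_splits (fun _ => True) e -> idem_splits P e.
Proof.
move=> R [K [I [iK [pK [iI [pI [_ [_ [E1 [E2 [E3 [E4 [E5 E6]]]]]]]]]]]]].
have [K' [k [k' [hK [Hk1 Hk2]]]]] := R _ _ _ E1.
have [I' [l [l' [hI [Hl1 Hl2]]]]] := R _ _ _ E2.
exists K', I', (iK \o k'), (k \o pK), (iI \o l'), (l \o pI).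
split => //; split => //.
split; first by rewrite cA -(cA _ pK k) E1 c1r Hk2.
split; first by rewrite cA -(cA _ pI l) E2 c1r Hl2.
split; first by rewrite cA -(cA _ pK k) E3 c0r c0l.
split; first by rewrite cA -(cA _ pI l) E4 c0r c0l.
have F1 : iK \o k' \o (k \o pK) = iK \o pK by rewrite cA -(cA k k' iK) Hk1 c1r.
have F2 : iI \o l' \o (l \o pI) = iI \o pI by rewrite cA -(cA l l' iI) Hl1 c1r.
by rewrite F1 F2.
Qed.

Lemma dir1 : idem_complete (T := T) (fun _ => True) -> idem_complete A /\ idem_complete B.
Proof.
move=> C; split => X e hX He; apply: transport (C X e I He).
- move=> K i p Hp; exact: retrA Hp hX.
- move=> K i p Hp; exact: retrB Hp hX.
Qed.
End P2.


Section P3.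
Variable T : TriCat.
Let L := tri_laws T.

Lemma sub_move (X Y : Obj T) (x y z : Hom T X Y) : x + - y = z -> x = y + z.
Proof. by move=> <-; rewrite (aC x (-y)) aA aN a0l. Qed.

Variables A B : Obj T -> Prop.
Hypothesis H : weakSOD A B.
Hypotheses (CA : idem_complete A) (CB : idem_complete B).

Lemma img P (X : Obj T) (e : Hom T X X) : idem_complete P -> P X -> e \o e = e ->
  exists Y (j : Hom T Y X) (q : Hom T X Y), P Y /\ q \o j = idm Y /\ j \o q = e.
Proof.
move=> C hX He.
have [K [I [iK [pK [iI [pI [_ [hI [_ [E2 [_ [_ [_ E6]]]]]]]]]]]]] := C X e hX He.
by exists I, iI, pI.
Qed.

Lemma tri3 (Bi Ai : Obj T) (k : Hom T Ai (shO Bi)) :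
  exists Y (be : Hom T Bi Y) (al : Hom T Y Ai), dist be al k.
Proof.
have [V [u [u' [Hu1 Hu2]]]] := sh_esurj L Ai.
have [w Hw] := sh_full L (- (k \o u)).
have [Y [be [al' D]]] := tr1_ext L w.
have D2 := rot D. rewrite Hw NN in D2.
exists Y, be, (u \o al').
apply: (tr1_iso L D2 (a := idm Bi) (b := idm Y) (c := u)).
- by exists (idm Bi); rewrite c1l.
- by exists (idm Y); rewrite c1l.
- by exists u'.
- by rewrite c1l c1r.
- by rewrite c1r.
- by rewrite sh1 c1l.
Qed.


Lemma morph (B0 X0 A0 B1 X1 A1 : Obj T) (b : Hom T B0 X0) (a : Hom T X0 A0) (c : Hom T A0 (shO B0))
  (b' : Hom T B1 X1) (a' : Hom T X1 A1) (c' : Hom T A1 (shO B1))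
  (x : Hom T A0 A1) (y : Hom T B0 B1) :
  dist b a c -> dist b' a' c' -> shH y \o c = c' \o x ->
  exists f : Hom T X0 X1, f \o b = b' \o y /\ x \o a = a' \o f.
Proof.
move=> D D' E.
have [g [G1 G2]] := tr3 L (rot (rot D)) (rot (rot D')) E.
have [f Hf] := sh_full L g. subst g.
exists f; split.
- apply: sh_inj; apply: N_inj. by rewrite !shc -cNr G1 cNl.
- apply: sh_inj; apply: N_inj. by rewrite !shc -cNr G2 cNl.
Qed.

Lemma image_split (X0 : Obj T) (e : Hom T X0 X0) : e \o e = e ->
  exists Y (p : Hom T X0 Y) (i : Hom T Y X0), p \o i = idm Y /\ i \o p = e.
Proof.
move=> He.
have [Bo [Ao [b [a [c [hB [hA D]]]]]]] := decomp H X0.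
have [eB [eA [Hb [Ha [IB [IA Hc]]]]]] := lift H D hB hA He.
have [BI [jB [qB [hBI [HqjB HjqB]]]]] := img CB hB IB.
have [AI [jA [qA [hAI [HqjA HjqA]]]]] := img CA hA IA.
set cI := shH qB \o c \o jA.
have [Y [be [al DY]]] := tri3 cI.
have QB : qB \o eB = qB by rewrite -HjqB cA HqjB c1l.
have JA : eA \o jA = jA by rewrite -HjqA -cA HqjA c1r.
have sq1 : shH qB \o c = cI \o qA.
  by rewrite /cI -cA HjqA -cA Hc cA -shc QB.
have sq2 : shH jB \o cI = c \o jA.
  by rewrite /cI !cA -shc HjqB -Hc -cA JA.
have [ph [Hphb Halph]] := morph D DY sq1.
have [ps [Hpsb Halps]] := morph DY D sq2.
have ab := dist_gf D. have albe := dist_gf DY.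
have d1 : (ps \o ph + - e) \o b = 0.
  by rewrite cDl cNl -cA Hphb cA Hpsb -cA HjqB Hb aN.
have d2 : a \o (ps \o ph + - e) = 0.
  by rewrite cDr cNr cA -Halps -cA -Halph cA HjqA Ha aN.
have [t Ht] := factor H D hB hA d1 d2.
have P1 := sub_move Ht.
have d3 : (ph \o ps + - idm Y) \o be = 0.
  by rewrite cDl cNl -cA Hpsb cA Hphb -cA HqjB c1r c1l aN.
have d4 : al \o (ph \o ps + - idm Y) = 0.
  by rewrite cDr cNr cA -Halph -cA -Halps cA HqjA c1l c1r aN.
have [t' Ht'] := factor H DY hBI hAI d3 d4.
have P2 := sub_move Ht'.

set ps2 := ps + - (b \o jB \o t' \o al).
have C1 : ph \o ps2 = idm Y.
  have E : ph \o (b \o jB \o t' \o al) = be \o t' \o al.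
    by rewrite !cA Hphb (cx HqjB) c1r.
  by rewrite /ps2 cDr cNr E P2 -aA aN a0.
set s := t + - (jB \o t' \o qA).
set j := b \o s \o a.
have C2 : ps2 \o ph = e + j.
  have E : b \o jB \o t' \o al \o ph = b \o jB \o t' \o qA \o a by rewrite (cx (eq_sym Halph)) cA.
  by rewrite /ps2 /j /s cDl cNl P1 E cDr cNr cDl cNl !cA -aA.
have ab' : forall W (x : Hom T Ao W), x \o a \o b = 0 by move=> W x; rewrite (cx ab) c0r.
have Jj : j \o j = 0.
  by rewrite /j !cA ab' !c0l.
have Jej : j \o e \o j = 0.
  by rewrite /j !cA (cx Ha) !cA ab' !c0l.
clearbody j.
have Ie : (e + j) \o (e + j) = e + j.
  by rewrite -C2 !cA (cx C1) c1r.
have K1 : e \o j + j \o e = j.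
  move: Ie; rewrite cDl !cDr He Jj a0 => E.
  apply: (aK (f := e)); by rewrite aA.
have K2 : e \o j \o e = 0.
  have E : e \o (e \o j + j \o e) \o e = e \o j \o e by rewrite K1.
  move: E; rewrite cDr cDl !cA He (cx He) => E.
  apply: (aK (f := e \o j \o e)); by rewrite E a0.
have K3 : e \o (ps2 \o ph) \o e = e.
  by rewrite C2 cDr cDl !He K2 a0.
set n := ph \o j \o ps2.
have Ee : e = ps2 \o ph + - j by rewrite C2 -aA aN a0.
have Ew : ph \o e \o ps2 = idm Y + - n.
  rewrite Ee cDr cNr cDl cNl !cA C1 c1l C1 //.
have Nn : n \o n = 0.
  have -> : n \o n = ph \o (j \o (ps2 \o ph) \o j) \o ps2 by rewrite /n !cA.
  by rewrite C2 cDr cDl Jej (cx Jj) c0r a0l c0r c0l.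
have Iw : (ph \o e \o ps2) \o (ph \o e \o ps2) = ph \o e \o ps2.
  have -> : (ph \o e \o ps2) \o (ph \o e \o ps2) = ph \o (e \o (ps2 \o ph) \o e) \o ps2
    by rewrite !cA.
  by rewrite K3.
have N0' : n = 0.
  move: Iw; rewrite Ew cDl c1l cNl cDr c1r cNr Nn N0 a0 => E.
  have E2 : idm Y + - n + - n = idm Y + - n + 0 by rewrite a0 E.
  apply: N_inj; rewrite N0; exact: (aK E2).
exists Y, (ph \o e), (e \o ps2); split.
- by rewrite cA (cx He) Ew N0' N0 a0.
- have -> : e \o ps2 \o (ph \o e) = e \o (ps2 \o ph) \o e by rewrite !cA.
  exact: K3.
Qed.

Lemma dir2 : idem_complete (T:=T) (fun _ => True).
Proof.
move=> X e _ He.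
have [I [pI [iI [E2 E6]]]] := image_split He.
have Hf : (idm X + - e) \o (idm X + - e) = idm X + - e.
  by rewrite cDl c1l cNl cDr c1r cNr He aN N0 a0.
have [K [pK [iK [E1 E5]]]] := image_split Hf.
have Z1 : (idm X + - e) \o e = 0 by rewrite cDl c1l cNl He aN.
have Z2 : e \o (idm X + - e) = 0 by rewrite cDr c1r cNr He aN.
exists K, I, iK, pK, iI, pI.
split; first done. split; first done.
split; first done. split; first done.
split.
  have -> : pK \o iI = pK \o (iK \o pK) \o (iI \o pI) \o iI
    by rewrite !cA E1 c1l (cx E2) c1r.
  by rewrite E5 E6 (cx Z1) c0r c0l.
split.
  have -> : pI \o iK = pI \o (iI \o pI) \o (iK \o pK) \o iK
    by rewrite !cA E2 c1l (cx E1) c1r.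
  by rewrite E6 E5 (cx Z2) c0r c0l.
by rewrite E5 E6 -aA aNl a0.
Qed.

End P3.


Theorem lemma4p6 (T : TriCat) (A B : Obj T -> Prop) :
  weakSOD A B ->
  weakSOD (T := IdemComp T) (Itilde A) (Itilde B) /\
  (idem_complete (fun _ : Obj T => True) <-> idem_complete A /\ idem_complete B).
Proof.
move=> H; split; first exact: part1 H.
split; first exact: dir1 H.
move=> [CA CB]; exact: dir2 H CA CB.
Qed.
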